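(* For every $x\in\mathcal{L}_q\cup\mathcal{T}_q$, $\mu^{-1}(\mu(x))=x$.
   Context: Let $S_b=(F_b,P_b,V_\infty,\delta_b)$ be a first-order signature ($F_b$ function symbols, constants being $0$-ary functions; $P_b$ predicate symbols; $V_\infty$ an infinite set of variables; $\delta_b$ the arities). Formulas are built from atoms with $\neg,\wedge,\forall$. Fix a finite set $V\subseteq V_\infty$ of ''quotable variables''. The augmented signature $S$ has predicate symbols $P=P_b\sqcup\{\mathbf{T}\}$ ($\mathbf{T}$ unary) and function symbols $F=F_b\sqcup\underline{F}\sqcup\underline{P}\sqcup\underline{V}\sqcup\{\underline{\wedge},\underline{\neg},\underline{\forall},\mathrm{quote}\}$, where $\underline{F}=\{\underline{f}:f\in F_b\}$ ($\underline f$ has the arity of $f$), $\underline{P}=\{\underline{p}:p\in P\}$ ($\underline p$ is a function symbol with the arity of $p$), $\underline{V}=\{\underline{x}:x\in V\}$ (constants), $\underline\wedge,\underline\forall$ binary, $\underline\neg,\mathrm{quote}$ unary; all new symbols are fresh. The set $\mathcal{Q}$ is the least set of terms containing each $\underline x\in\underline V$ and closed under forming $\underline f(t_1,\dots,t_n)$ ($\underline f\in\underline F$), $\underline p(t_1,\dots,t_n)$ ($\underline p\in\underline P$), $\underline\wedge(t_1,t_2)$, $\underline\neg(t)$, $\underline\forall(\underline x,t)$ ($\underline x\in\underline V$), $\mathrm{quote}(t)$, for $t,t_i\in\mathcal{Q}$. The set $\mathcal Q_v$ is defined identically but additionally contains $\mathrm{quote}(x)$ for each variable $x\in V$ (closed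 under the same constructors). The sets $\mathcal{T}_q$ (quotable terms), $\mathcal{L}_q$ (quotable formulas) and the map $\mu$ are defined by simultaneous induction: $\mathcal T_q$ contains every variable $x\in V$, every $f(t_1,\dots,t_n)$ with $f\in F_b$, $t_i\in\mathcal T_q$, and every term $\mu(e)$ with $e\in\mathcal T_q\cup\mathcal L_q$; $\mathcal L_q$ contains $p(t_1,\dots,t_n)$ with $p\in P_b$, $t_i\in\mathcal T_q$, and $\forall x.\varphi$ ($x\in V$), $\neg\varphi$, $\varphi_1\wedge\varphi_2$ for $\varphi,\varphi_i\in\mathcal L_q$. The quotation map is: $\mu(f(t_1,\dots,t_n))=\underline f(\mu(t_1),\dots,\mu(t_n))$ for $f\in F_b$; $\mu(t_q)=\mathrm{quote}(t_q)$ for $t_q\in\mathcal Q$; $\mu(p(t_1,\dots,t_n))=\underline p(\mu(t_1),\dots,\mu(t_n))$; $\mu(x)=\underline x$; $\mu(\varphi_1\wedge\varphi_2)=\underline\wedge(\mu(\varphi_1),\mu(\varphi_2))$; $\mu(\neg\varphi)=\underline\neg(\mu(\varphi))$; $\mu(\forall x.\varphi)=\underline\forall(\underline x,\mu(\varphi))$. Quoted substitution: for a term $t$ and $x\in V$, $z[\underline x\leftarrow t]_q$ is defined on $z\in\mathcal Q_v$ by: $\underline x[\underline x\leftarrow t]_q=t$; $\underline y[\underline x\leftarrow t]_q=\underline y$ for $\underline y\ne\underline x$; it commutes with $\underline f\in\underline F$, $\underline p\in\underline P$, $\underline\wedge$ and $\underline\neg$ (applied to each argument); $\underline\forall(t_1,t_2)[\underline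 x\leftarrow t]_q=\underline\forall(t_1[\underline x\leftarrow t]_q,t_2[\underline x\leftarrow t]_q)$ if $t_1\neq\underline x$; $\underline\forall(\underline x,t_2)[\underline x\leftarrow t]_q=\underline\forall(\underline x,t_2)$; in all other cases (e.g. $\mathrm{quote}(s)$) the term is unchanged. The unquote operator $\mu^{-1}$ on $\mathcal Q_v$: $\mu^{-1}(\underline f(t_1,\dots,t_n))=f(\mu^{-1}(t_1),\dots,\mu^{-1}(t_n))$; $\mu^{-1}(\underline p(t_1,\dots,t_n))=p(\mu^{-1}(t_1),\dots,\mu^{-1}(t_n))$; $\mu^{-1}(\mathrm{quote}(t))=t$; $\mu^{-1}(\varphi_1\underline\wedge\varphi_2)=\mu^{-1}(\varphi_1)\wedge\mu^{-1}(\varphi_2)$; $\mu^{-1}(\underline\neg\varphi)=\neg\mu^{-1}(\varphi)$; $\mu^{-1}(\underline\forall(\underline x,\varphi))=\forall x.\ \mu^{-1}(\varphi[\underline x\leftarrow\mathrm{quote}(x)]_q)$; $\mu^{-1}(\underline x)=x$; $\mu^{-1}(t)=t$ in all other cases. *)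

(* Defs.v *)
From mathcomp Require Import all_boot.
From Stdlib Require Lists.List.
Set Implicit Arguments. Unset Strict Implicit. Unset Printing Implicit Defensive.

(* Single-sorted syntax of the augmented signature S: terms and formulas of S
   live in one type [expr]; well-sortedness is imposed by the predicates
   [Tq]/[Lq] below. *)
Section Syntax.
Variables (Fb Pb : Type) (Vinf : eqType).

(* predicate symbols of S : P = P_b ⊔ {T} *)
Inductive psym := PB (p : Pb) | PT.

Inductive expr :=
| EVar (x : Vinf)
| EApp (f : Fb) (args : list expr)
| EPred (p : psym) (args : list expr)
| EAnd (a b : expr)
| ENot (a : expr)
| EAll (x : Vinf) (a : expr)
(* the fresh function symbols of S *)
| QFun (f : Fb) (args : list expr)
| QPred (p : psym) (args : list expr)
| QVar (x : Vinf)
| QAnd (a b : expr)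
| QNot (a : expr)
| QAll (a b : expr)
| Quote (a : expr).

(* The quotation map mu (on T_q ∪ L_q; totalised: on the remaining term
   shapes of T_q, which are exactly the elements of Q, it is quote). *)
Fixpoint mu (e : expr) : expr :=
  match e with
  | EVar x => QVar x
  | EApp f args => QFun f (map mu args)
  | EPred p args => QPred p (map mu args)
  | EAnd a b => QAnd (mu a) (mu b)
  | ENot a => QNot (mu a)
  | EAll x a => QAll (QVar x) (mu a)
  | _ => Quote e
  end.

Definition is_qvar_of (x : Vinf) (t : expr) : bool :=
  if t is QVar y then y == x else false.

Fixpoint qsubst (x : Vinf) (t : expr) (z : expr) : expr :=
  match z with
  | QVar y => if y == x then t else QVar y
  | QFun f args => QFun f (map (qsubst x t) args)
  | QPred p args => QPred p (map (qsubst x t) args)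
  | QAnd a b => QAnd (qsubst x t a) (qsubst x t b)
  | QNot a => QNot (qsubst x t a)
  | QAll t1 t2 =>
      if is_qvar_of x t1 then QAll t1 t2
      else QAll (qsubst x t t1) (qsubst x t t2)
  | _ => z
  end.

(* size measure: underline x and quote(_) count 1; preserved by
   [qsubst x (Quote (EVar x))], so it bounds the recursion depth of the
   unquote operator. *)
Fixpoint esize (e : expr) : nat :=
  match e with
  | QVar _ | Quote _ | EVar _ => 1
  | EApp _ args | EPred _ args | QFun _ args | QPred _ args =>
      (sumn (map esize args)).+1
  | EAnd a b | QAnd a b | QAll a b => (esize a + esize b).+1
  | ENot a | QNot a | EAll _ a => (esize a).+1
  end.

(* unquote operator, with fuel (fuel [esize e] is always sufficient) *)
Fixpoint unquote_fuel (n : nat) (e : expr) : expr :=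
  match n with
  | 0 => e
  | n'.+1 =>
    match e with
    | QFun f args => EApp f (map (unquote_fuel n') args)
    | QPred p args => EPred p (map (unquote_fuel n') args)
    | Quote t => t
    | QAnd a b => EAnd (unquote_fuel n' a) (unquote_fuel n' b)
    | QNot a => ENot (unquote_fuel n' a)
    | QAll (QVar x) a =>
        EAll x (unquote_fuel n' (qsubst x (Quote (EVar x)) a))
    | QVar x => EVar x
    | _ => e
    end
  end.

Definition unquote (e : expr) : expr := unquote_fuel (esize e) e.

Variables (arF : Fb -> nat) (arP : Pb -> nat) (V : seq Vinf).

Inductive Tq : expr -> Prop :=
| Tq_var x : x \in V -> Tq (EVar x)
| Tq_app f args : size args = arF f -> (forall t, Stdlib.Lists.List.In t args -> Tq t) ->
    Tq (EApp f args)
| Tq_mu_term e : Tq e -> Tq (mu e)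
| Tq_mu_form e : Lq e -> Tq (mu e)
with Lq : expr -> Prop :=
| Lq_atom p args : size args = arP p -> (forall t, Stdlib.Lists.List.In t args -> Tq t) ->
    Lq (EPred (PB p) args)
| Lq_all x a : x \in V -> Lq a -> Lq (EAll x a)
| Lq_not a : Lq a -> Lq (ENot a)
| Lq_and a b : Lq a -> Lq b -> Lq (EAnd a b).

End Syntax.

(* Main.v *)
Require Import Defs.
From mathcomp Require Import all_boot.
From Stdlib Require Lists.List.

Section Aux.
Variables (Fb Pb : Type) (Vinf : eqType).
Notation E := (expr Fb Pb Vinf).

Definition expr_ind' (P : E -> Prop)
  (hVar : forall x, P (EVar _ _ x))
  (hApp : forall f args, (forall t, Stdlib.Lists.List.In t args -> P t) -> P (EApp f args))
  (hPred : forall p args, (forall t, Stdlib.Lists.List.In t args -> P t) -> P (EPred p args))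
  (hAnd : forall a b, P a -> P b -> P (EAnd a b))
  (hNot : forall a, P a -> P (ENot a))
  (hAll : forall x a, P a -> P (EAll x a))
  (hQFun : forall f args, P (QFun f args))
  (hQPred : forall p args, P (QPred p args))
  (hQVar : forall x, P (QVar _ _ x))
  (hQAnd : forall a b, P (QAnd a b))
  (hQNot : forall a, P (QNot a))
  (hQAll : forall a b, P (QAll a b))
  (hQuote : forall a, P (Quote a)) : forall e, P e :=
  fix F (e : E) : P e :=
  match e with
  | EVar x => hVar x
  | EApp f args => hApp f args
      ((fix G (l : list E) : forall t, Stdlib.Lists.List.In t l -> P t :=
         match l with
         | nil => fun t H => match H with end
         | cons u l' => fun t H =>
             match H with
             | or_introl Hu => eq_ind u P (F u) t Hu
             | or_intror H' => G l' t H'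
             end
         end) args)
  | EPred p args => hPred p args
      ((fix G (l : list E) : forall t, Stdlib.Lists.List.In t l -> P t :=
         match l with
         | nil => fun t H => match H with end
         | cons u l' => fun t H =>
             match H with
             | or_introl Hu => eq_ind u P (F u) t Hu
             | or_intror H' => G l' t H'
             end
         end) args)
  | EAnd a b => hAnd a b (F a) (F b)
  | ENot a => hNot a (F a)
  | EAll x a => hAll x a (F a)
  | QFun f args => hQFun f args
  | QPred p args => hQPred p args
  | QVar x => hQVar x
  | QAnd a b => hQAnd a b
  | QNot a => hQNot a
  | QAll a b => hQAll a b
  | Quote a => hQuote a
  end.

Fixpoint msub (s : seq Vinf) (e : E) : E :=
  match e with
  | EVar x => if x \in s then Quote (EVar _ _ x) else QVar _ _ x
  | EApp f args => QFun f (map (msub s) args)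
  | EPred p args => QPred p (map (msub s) args)
  | EAnd a b => QAnd (msub s a) (msub s b)
  | ENot a => QNot (msub s a)
  | EAll x a => QAll (QVar _ _ x) (msub [seq y <- s | y != x] a)
  | _ => Quote e
  end.

Lemma map_in_eq (A B : Type) (f g : A -> B) (l : list A) :
  (forall t, Stdlib.Lists.List.In t l -> f t = g t) -> map f l = map g l.
Proof.
elim: l => //= a l IH H; rewrite H; last by left.
by rewrite IH // => t Ht; apply: H; right.
Qed.

Lemma msub_ext e : forall s1 s2, s1 =i s2 -> msub s1 e = msub s2 e.
Proof.
elim/expr_ind': e => //=.
- by move=> x s1 s2 H; rewrite H.
- by move=> f args IH s1 s2 H; congr QFun; apply: map_in_eq => t Ht; apply: IH.
- by move=> f args IH s1 s2 H; congr QPred; apply: map_in_eq => t Ht; apply: IH.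
- by move=> a b IHa IHb s1 s2 H; rewrite (IHa _ _ H) (IHb _ _ H).
- by move=> a IHa s1 s2 H; rewrite (IHa _ _ H).
- move=> x a IHa s1 s2 H; congr QAll; apply: IHa => y.
  by rewrite !mem_filter H.
Qed.

Lemma qsubst_msub e : forall s x,
  qsubst x (Quote (EVar _ _ x)) (msub s e) = msub (x :: s) e.
Proof.
elim/expr_ind': e => //=.
- move=> y s x; rewrite in_cons; case: (y \in s); first by rewrite orbT.
  by rewrite orbF /=; case: eqP => [->|]; rewrite ?eqxx //; case: eqP => // ->.
- move=> f args IH s x; congr QFun; rewrite -map_comp.
  by apply: map_in_eq => t Ht /=; apply: IH.
- move=> f args IH s x; congr QPred; rewrite -map_comp.
  by apply: map_in_eq => t Ht /=; apply: IH.
- by move=> a b IHa IHb s x; rewrite IHa IHb.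
- by move=> a IHa s x; rewrite IHa.
- move=> y a IHa s x; rewrite /is_qvar_of.
  case: eqP => [->|Hyx].
    congr QAll; apply: msub_ext => z.
    by rewrite eqxx.
  have Hxy : x != y by apply/eqP => E0; apply: Hyx; rewrite E0.
  rewrite Hxy; congr QAll; rewrite IHa; apply: msub_ext => z.
  by [].
Qed.

Lemma esize_msub e : forall s1 s2, esize (msub s1 e) = esize (msub s2 e).
Proof.
elim/expr_ind': e => //=.
- by move=> x s1 s2; case: (x \in s1); case: (x \in s2).
- move=> f args IH s1 s2; rewrite -!map_comp; congr (_.+1); congr sumn.
  by apply: map_in_eq => t Ht /=; apply: IH.
- move=> f args IH s1 s2; rewrite -!map_comp; congr (_.+1); congr sumn.
  by apply: map_in_eq => t Ht /=; apply: IH.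
- by move=> a b IHa IHb s1 s2; rewrite (IHa s1 s2) (IHb s1 s2).
- by move=> a IHa s1 s2; rewrite (IHa s1 s2).
- by move=> x a IHa s1 s2; rewrite (IHa _ [seq y <- s2 | y != x]).
Qed.

Lemma esize_in t l : Stdlib.Lists.List.In t l -> esize t <= sumn (map (@esize Fb Pb Vinf) l).
Proof.
elim: l => //= a l IH [->|H]; first by apply: leq_addr.
by apply: leq_trans (IH H) _; apply: leq_addl.
Qed.

Lemma unq_msub e : forall s n, esize (msub s e) <= n ->
  unquote_fuel n (msub s e) = e.
Proof.
elim/expr_ind': e.
- by move=> x s [|n] //=; case: (x \in s).
- move=> f args IH s [|n] //= Hn; congr EApp; rewrite -map_comp.
  rewrite -[RHS]map_id; apply: map_in_eq => t Ht /=; apply: IH => //.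
  rewrite ltnS in Hn; apply: leq_trans Hn; apply: esize_in.
  exact: (Stdlib.Lists.List.in_map (msub s)).
- move=> f args IH s [|n] //= Hn; congr EPred; rewrite -map_comp.
  rewrite -[RHS]map_id; apply: map_in_eq => t Ht /=; apply: IH => //.
  rewrite ltnS in Hn; apply: leq_trans Hn; apply: esize_in.
  exact: (Stdlib.Lists.List.in_map (msub s)).
- move=> a b IHa IHb s [|n] //= Hn; rewrite ltnS in Hn; rewrite IHa ?IHb //.
    by apply: leq_trans Hn; apply: leq_addl.
  by apply: leq_trans Hn; apply: leq_addr.
- by move=> a IHa s [|n] //= Hn; rewrite ltnS in Hn; rewrite IHa.
- move=> x a IHa s [|n] //= Hn; rewrite ltnS in Hn; rewrite qsubst_msub IHa //.
  rewrite (esize_msub _ _ [seq y <- s | y != x]); apply: leq_trans Hn.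
  exact: leq_addl.
all: by intros until n; case: n.
Qed.

Lemma mu_msub e : mu e = msub [::] e.
Proof.
elim/expr_ind': e => //=.
- by move=> f args IH; congr QFun; apply: map_in_eq.
- by move=> f args IH; congr QPred; apply: map_in_eq.
- by move=> a b -> ->.
- by move=> a ->.
- by move=> x a ->.
Qed.

End Aux.

Theorem proposition4p16 (Fb Pb : Type) (Vinf : eqType)
  (arF : Fb -> nat) (arP : Pb -> nat) (V : seq Vinf)
  (Vinf_infinite : ~ exists s : seq Vinf, forall x : Vinf, x \in s)
  (e : expr Fb Pb Vinf) :
  Tq arF arP V e \/ Lq arF arP V e -> unquote (mu e) = e.
Proof.
move=> _; rewrite /unquote mu_msub; exact: unq_msub.
Qed.
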